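(* Let $\alpha>0$ and $g,h\in\mathbb{R}$ with $h>g$ and $g\neq 1$, and put $\gamma=h-g$, $\lambda=1-g$. Suppose there is an integer $N\geq 1$ with $N\gamma-g=-1$. Let $F_0\in(0,1)$ and $X_0\in\mathbb{R}$, and let $F$ be a differentiable function on an interval $I\ni X_0$ with values in $(0,1)$ satisfying $$\frac{dF}{dX}=\alpha\,(F^g-F^h),\qquad F(X_0)=F_0 .$$ Then for every $X\in I$, writing $F=F(X)$, $$X=X_0+\frac{1}{\alpha}\left[\ln\!\left(\frac{F}{F_0}\right)+\sum_{k=0,\,k\neq N}^{\infty}\frac{F^{k\gamma+\lambda}-F_0^{k\gamma+\lambda}}{k\gamma+\lambda}\right].$$
   Context: The equation $dF/dX=\alpha(F^g-F^h)$ with $\alpha>0$, $h>g$ defines the S-distribution ($F$ the cumulative distribution function). The existence of such an $N$ is equivalent to $g>1$ and $h=(1+N^{-1})g-N^{-1}$. *)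

(* Defs.v *)
From Stdlib Require Import Reals.
From Coquelicot Require Import Coquelicot.
Open Scope R_scope.

(* k-th term of the series  sum_{k>=0, k<>N} (F^{k g + l} - F0^{k g + l}) / (k g + l),
   with the excluded index k = N replaced by 0.  Real powers are Rpower
   (x^y = exp (y ln x), used only for x > 0). *)
Definition S_term (gam lam : R) (N : nat) (F F0 : R) (k : nat) : R :=
  if Nat.eq_dec k N then 0
  else (Rpower F (INR k * gam + lam) - Rpower F0 (INR k * gam + lam))
       / (INR k * gam + lam).

(* Main.v *)
Require Import Defs.
From Stdlib Require Import Reals Lra Lia.
From Coquelicot Require Import Coquelicot.
Open Scope R_scope.

Definition Tk (gam lam : R) (N k : nat) (u : R) : R :=
  if Nat.eq_dec k N then ln u
  else Rpower u (INR k * gam + lam) / (INR k * gam + lam).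

Lemma Tk_deriv gam lam N k u : 0 < u -> INR N * gam + lam = 0 ->
  (k <> N -> INR k * gam + lam <> 0) ->
  is_derive (Tk gam lam N k) u (Rpower u (INR k * gam + lam - 1)).
Proof.
  intros Hu HN Hk. unfold Tk. destruct (Nat.eq_dec k N) as [->|n].
  - rewrite HN. replace (0 - 1) with (- (1)) by ring.
    rewrite Rpower_Ropp, Rpower_1 by lra. now apply is_derive_ln.
  - specialize (Hk n). set (e := INR k * gam + lam) in *.
    unfold Rpower. auto_derive; [lra|].
    replace ((e - 1) * ln u) with (e * ln u + - ln u) by ring.
    rewrite exp_plus, exp_Ropp, exp_ln by lra. field. lra.
Qed.

Lemma Rpower_one_lt u gam : 0 < u < 1 -> 0 < gam -> Rpower u gam < 1.
Proof.
  intros Hu Hg. assert (E : Rpower 1 gam = 1).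
  { unfold Rpower. rewrite ln_1, Rmult_0_r, exp_0. reflexivity. }
  rewrite <- E. apply Rlt_Rpower_l; lra.
Qed.

Lemma geom_id alpha g gam u n : 0 < u < 1 -> 0 < gam ->
  alpha * (Rpower u g - Rpower u (g + gam)) *
  sum_n (fun k => Rpower u (INR k * gam + (1 - g) - 1)) n
  = alpha * (1 - (Rpower u gam) ^ (S n)).
Proof.
  intros Hu Hg. set (q := Rpower u gam).
  assert (Hq1 : q < 1) by (apply Rpower_one_lt; auto).
  assert (Hq0 : 0 < q) by (unfold q, Rpower; apply exp_pos).
  rewrite (sum_n_ext _ (fun k => mult (Rpower u (- g)) (q ^ k))).
  2:{ intros k. unfold mult; simpl. unfold q.
      rewrite <- Rpower_pow by (unfold Rpower; apply exp_pos).
      rewrite Rpower_mult, <- Rpower_plus. f_equal. ring. }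
  rewrite sum_n_mult_l, sum_n_Reals, tech3 by lra. unfold mult; simpl.
  rewrite Rpower_plus. fold q.
  assert (E : Rpower u g * Rpower u (- g) = 1).
  { rewrite <- Rpower_plus. replace (g + - g) with 0 by ring. apply Rpower_O. lra. }
  replace (alpha * (Rpower u g - Rpower u g * q) * (Rpower u (- g) * ((1 - q * q ^ n) / (1 - q))))
    with (alpha * (Rpower u g * Rpower u (- g)) * (1 - q) * ((1 - q * q ^ n) / (1 - q))) by ring.
  rewrite E. field. lra.
Qed.

Lemma between (a b : Rbar) (x y c : R) : Rbar_lt a x -> Rbar_lt x b -> Rbar_lt a y -> Rbar_lt y b ->
  Rmin x y <= c <= Rmax x y -> Rbar_lt a c /\ Rbar_lt c b.
Proof.
  intros H1 H2 H3 H4 H5. unfold Rmin, Rmax in H5.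
  destruct a, b; simpl in *; try tauto; destruct (Rle_dec x y); split; auto; try lra.
Qed.

Lemma ind_sum (L : R) N n : sum_n (fun k => if Nat.eq_dec k N then L else 0) n =
  if Nat.leb N n then L else 0.
Proof.
  induction n.
  - rewrite sum_O. destruct N; simpl; auto.
  - rewrite sum_Sn, IHn. cbv beta.
    destruct (Nat.eq_dec (S n) N) as [e|e]; unfold plus; simpl;
    destruct (Nat.leb_spec N n); destruct (Nat.leb_spec N (S n)); try lia; lra.
Qed.

Lemma geom_id' alpha g h u n : 0 < u < 1 -> g < h ->
  alpha * (Rpower u g - Rpower u h) *
  sum_n (fun k => Rpower u (INR k * (h - g) + (1 - g) - 1)) n
  = alpha * (1 - (Rpower u (h - g)) ^ (S n)).
Proof.
  intros Hu Hgh. rewrite <- (geom_id alpha g (h - g) u n) by (auto; lra).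
  replace (g + (h - g)) with h by ring. reflexivity.
Qed.

Lemma cont_of_deriv f x l : is_derive f x l -> continuity_pt f x.
Proof.
  intros H. apply derivable_continuous_pt. exists l. apply is_derive_Reals. exact H.
Qed.

Lemma Sterm_id gam lam N u v k : 0 < u -> 0 < v ->
  S_term gam lam N u v k + (if Nat.eq_dec k N then ln (u / v) else 0)
  = Tk gam lam N k u - Tk gam lam N k v.
Proof.
  intros Hu Hv. unfold S_term, Tk. destruct (Nat.eq_dec k N).
  - rewrite ln_div by lra. ring.
  - unfold Rdiv. ring.
Qed.

Lemma sum_mult_R (c : R) (u : nat -> R) n : sum_n (fun k => c * u k) n = c * sum_n u n.
Proof. apply (sum_n_mult_l (K := R_Ring)). Qed.

Lemma plus_R (x y : R) : plus x y = x + y.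
Proof. reflexivity. Qed.

Lemma minus_R (x y : R) : minus x y = x - y.
Proof. reflexivity. Qed.

Theorem mainTheorem3
  (alpha g h : R) (N : nat) (F0 X0 : R) (a b : Rbar) (F : R -> R) :
  0 < alpha -> g < h -> g <> 1 ->
  (1 <= N)%nat -> INR N * (h - g) - g = -1 ->
  0 < F0 < 1 ->
  Rbar_lt a X0 -> Rbar_lt X0 b ->
  (forall x : R, Rbar_lt a x -> Rbar_lt x b -> 0 < F x < 1) ->
  (forall x : R, Rbar_lt a x -> Rbar_lt x b ->
     is_derive F x (alpha * (Rpower (F x) g - Rpower (F x) h))) ->
  F X0 = F0 ->
  forall X : R, Rbar_lt a X -> Rbar_lt X b ->
    exists S : R,
      is_series (S_term (h - g) (1 - g) N (F X) F0) S /\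
      X = X0 + / alpha * (ln (F X / F0) + S).
Proof.
  intros Ha Hgh Hg1 HN1 HN HF0 HaX0 HX0b HFI HFd HFX0 X HaX HXb.
  assert (HNl : INR N * (h - g) + (1 - g) = 0) by lra.
  assert (Hk : forall k, k <> N -> INR k * (h - g) + (1 - g) <> 0).
  { intros k Hk E. apply Hk. apply INR_eq.
    assert (E2 : (INR k - INR N) * (h - g) = 0) by lra.
    apply Rmult_integral in E2; destruct E2; lra. }
  assert (HDpos : forall x : R, Rbar_lt a x -> Rbar_lt x b ->
            0 <= alpha * (Rpower (F x) g - Rpower (F x) h)).
  { intros x H1 H2. destruct (HFI x H1 H2). unfold Rpower.
    assert (ln (F x) < 0) by (rewrite <- ln_1; apply ln_increasing; lra).
    apply Rmult_le_pos; [lra|]. apply Rlt_le, Rlt_Rminus, exp_increasing. nra. }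
  assert (Hmono : forall x y : R, Rbar_lt a x -> Rbar_lt x b -> Rbar_lt a y -> Rbar_lt y b ->
            x <= y -> F x <= F y).
  { intros x y H1 H2 H3 H4 Hxy.
    destruct (MVT_gen F x y (fun z => alpha * (Rpower (F z) g - Rpower (F z) h)))
      as [c [Hc E]].
    - intros z Hz. destruct (between a b x y z H1 H2 H3 H4) as [H5 H6]; [lra|].
      apply HFd; auto.
    - intros z Hz. destruct (between a b x y z H1 H2 H3 H4) as [H5 H6]; [lra|].
      eapply cont_of_deriv. apply HFd; auto.
    - rewrite Rmin_left, Rmax_right in Hc by lra.
      destruct (between a b x y c H1 H2 H3 H4) as [H5 H6];
        [rewrite Rmin_left, Rmax_right by lra; lra|].
      pose proof (HDpos c H5 H6). nra. }
  assert (Hder : forall (n : nat) (z : R), Rbar_lt a z -> Rbar_lt z b ->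
     is_derive (fun x => sum_n (fun k => Tk (h - g) (1 - g) N k (F x)) n - alpha * x) z
        (- alpha * (Rpower (F z) (h - g)) ^ (S n))).
  { intros n z H1 H2. destruct (HFI z H1 H2).
    assert (A : is_derive (fun x => sum_n (fun k => Tk (h - g) (1 - g) N k (F x)) n) z
       (sum_n (fun k => alpha * (Rpower (F z) g - Rpower (F z) h) *
                        Rpower (F z) (INR k * (h - g) + (1 - g) - 1)) n)).
    { apply (is_derive_sum_n (fun k x => Tk (h - g) (1 - g) N k (F x))). intros k _.
      apply (is_derive_comp (Tk (h - g) (1 - g) N k) F z).
      - apply Tk_deriv; [lra | exact HNl | exact (Hk k)].
      - apply HFd; auto. }
    assert (B : is_derive (fun x => alpha * x) z alpha).
    { auto_derive; auto; ring. }
    pose proof (is_derive_minus _ _ _ _ _ A B) as C.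
    replace (- alpha * Rpower (F z) (h - g) ^ S n) with
      (minus (sum_n (fun k => alpha * (Rpower (F z) g - Rpower (F z) h) *
           Rpower (F z) (INR k * (h - g) + (1 - g) - 1)) n) alpha).
    { exact C. }
    rewrite minus_R, sum_mult_R, geom_id' by lra. match goal with |- ?x = ?y => change (@eq R x y) end; ring. }
  pose proof (HFI X HaX HXb) as [HFX1 HFX2].
  set (M := Rmax F0 (F X)).
  assert (HM : 0 < M < 1) by (unfold M, Rmax; destruct (Rle_dec F0 (F X)); lra).
  set (m := Rpower M (h - g)).
  assert (Hm1 : m < 1) by (apply Rpower_one_lt; lra).
  assert (Hm0 : 0 < m) by (unfold m, Rpower; apply exp_pos).
  set (v := fun n => sum_n (fun k => Tk (h - g) (1 - g) N k (F X)) n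
                     - sum_n (fun k => Tk (h - g) (1 - g) N k F0) n).
  set (K := alpha * Rabs (X - X0)).
  assert (Hbound : forall n, alpha * (X - X0) - K * m ^ (S n) <= v n
                            <= alpha * (X - X0) + K * m ^ (S n)).
  { intros n.
    destruct (MVT_gen (fun x => sum_n (fun k => Tk (h - g) (1 - g) N k (F x)) n - alpha * x)
               X0 X (fun x => - alpha * (Rpower (F x) (h - g)) ^ (S n))) as [c [Hc E]].
    - intros z Hz. destruct (between a b X0 X z HaX0 HX0b HaX HXb) as [H5 H6]; [lra|].
      apply Hder; auto.
    - intros z Hz. destruct (between a b X0 X z HaX0 HX0b HaX HXb) as [H5 H6]; [lra|].
      eapply cont_of_deriv. apply Hder; auto.
    - destruct (between a b X0 X c HaX0 HX0b HaX HXb Hc) as [H5 H6].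
      pose proof (HFI c H5 H6) as [Hc1 Hc2].
      assert (HFc : F c <= M).
      { unfold Rmin, Rmax in Hc. unfold M. destruct (Rle_dec X0 X).
        - apply Rle_trans with (F X); [apply Hmono; auto; lra | apply Rmax_r].
        - apply Rle_trans with (F X0); [apply Hmono; auto; lra | rewrite HFX0; apply Rmax_l]. }
      set (q := Rpower (F c) (h - g)) in E.
      assert (Hq : 0 <= q <= m).
      { split. unfold q, Rpower; left; apply exp_pos.
        apply Rle_Rpower_l; lra. }
      assert (Hp : 0 <= q ^ S n <= m ^ S n).
      { split. apply pow_le; lra. apply pow_incr; lra. }
      assert (Ev : v n = alpha * (X - X0) - alpha * q ^ S n * (X - X0)).
      { unfold v. rewrite <- HFX0. lra. }
      rewrite Ev. unfold K. set (p := q ^ S n) in *. set (P := m ^ S n) in *.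
      assert (A1 : 0 <= alpha * (P - p)) by (apply Rmult_le_pos; lra).
      assert (A2 : 0 <= alpha * p) by (apply Rmult_le_pos; lra).
      assert (A3 : 0 <= alpha * P) by (apply Rmult_le_pos; lra).
      unfold Rabs; destruct (Rcase_abs (X - X0)); split; nra. }
  assert (Lw : is_lim_seq (fun n => K * m ^ (S n)) 0).
  { replace (Finite 0) with (Rbar_mult K 0) by (simpl; f_equal; ring).
    apply is_lim_seq_scal_l.
    apply (is_lim_seq_incr_1 (fun n => m ^ n) 0).
    apply is_lim_seq_geom. rewrite Rabs_pos_eq; lra. }
  assert (Lv : is_lim_seq v (alpha * (X - X0))).
  { apply is_lim_seq_le_le with (u := fun n => alpha * (X - X0) - K * m ^ (S n))
                                (w := fun n => alpha * (X - X0) + K * m ^ (S n)).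
    - exact Hbound.
    - replace (Finite (alpha * (X - X0))) with (Finite (alpha * (X - X0) - 0)) by (f_equal; ring).
      apply is_lim_seq_minus'; [apply is_lim_seq_const | exact Lw].
    - replace (Finite (alpha * (X - X0))) with (Finite (alpha * (X - X0) + 0)) by (f_equal; ring).
      apply is_lim_seq_plus'; [apply is_lim_seq_const | exact Lw]. }
  set (L := ln (F X / F0)).
  assert (Hsum : forall n, sum_n (S_term (h - g) (1 - g) N (F X) F0) n
                   + sum_n (fun k => if Nat.eq_dec k N then L else 0) n = v n).
  { intros n. unfold v. induction n.
    - rewrite !sum_O. apply Sterm_id; lra.
    - rewrite !sum_Sn. cbv beta. change (@plus R_AbelianMonoid) with Rplus.
      pose proof (Sterm_id (h - g) (1 - g) N (F X) F0 (S n) HFX1 ltac:(lra)) as E1.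
      fold L in E1. match type of IHn with ?x = ?y => change (@eq R x y) in IHn end. match goal with |- ?x = ?y => change (@eq R x y) end. destruct (Nat.eq_dec (S n) N); lra. }
  exists (alpha * (X - X0) - L). split.
  - assert (Ls : is_lim_seq (sum_n (S_term (h - g) (1 - g) N (F X) F0)) (alpha * (X - X0) - L)).
    { apply is_lim_seq_ext_loc with (fun n => v n - L).
      - exists N. intros n Hn. rewrite <- (Hsum n), ind_sum.
        destruct (Nat.leb_spec N n); [ring | lia].
      - apply is_lim_seq_minus'; [exact Lv | apply is_lim_seq_const]. }
    exact Ls.
  - fold L. field. lra.
Qed.
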